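(* There exist a spatial constraint system $(\mathrm{Con},\sqsubseteq,(s_i)_{i\in G})$ with distributed spaces $(\Delta_I)_{I\subseteq G}$, elements $c,e\in\mathrm{Con}$ and a set $I\subseteq G$ such that (1) $e$ is compact, (2) $c\sqsupseteq\Delta_I(e)$, and (3) there is no finite subset $J\subseteq I$ with $c\sqsupseteq\Delta_J(e)$.
   Context: A constraint system (cs) is a complete lattice $(\mathrm{Con},\sqsubseteq)$ with join $\sqcup$, bottom $\mathit{true}$. A space function is a continuous (directed-join preserving) self-map $f$ on $\mathrm{Con}$ with $f(\mathit{true})=\mathit{true}$ and $f(c\sqcup d)=f(c)\sqcup f(d)$; $\mathcal{S}(\mathrm{Con})$ denotes the set of space functions ordered pointwise ($f\preceq g$ iff $f(c)\sqsubseteq g(c)$ for all $c$). A spatial constraint system $(\mathrm{Con},\sqsubseteq,(s_i)_{i\in G})$ is a cs with space functions $s_i$ indexed by an arbitrary set $G$. Distributed spaces: $\Delta_I=\max\{f\in\mathcal{S}(\mathrm{Con}) : f\preceq s_i\text{ for all }i\in I\}$ (this maximum exists). An element $e$ is compact if for every directed $D\subseteq\mathrm{Con}$, $e\sqsubseteq\bigsqcup D$ implies $e\sqsubseteq d$ for some $d\in D$. *)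

(* Defs.v *)
(* sets are predicates [T -> Prop]. *)
From Stdlib Require Import List.

Record cs := {
  Con :> Type;
  le : Con -> Con -> Prop;
  le_refl : forall x, le x x;
  le_trans : forall x y z, le x y -> le y z -> le x z;
  le_antisym : forall x y, le x y -> le y x -> x = y;
  sup : (Con -> Prop) -> Con;
  sup_ub : forall (S : Con -> Prop) x, S x -> le x (sup S);
  sup_least : forall (S : Con -> Prop) y,
      (forall x, S x -> le x y) -> le (sup S) y
}.

Arguments le {c} _ _.
Arguments sup {c} _.

Definition join {C : cs} (c d : C) : C := sup (fun x => x = c \/ x = d).
Definition ctrue {C : cs} : C := sup (fun _ => False).

Definition directed {C : cs} (D : C -> Prop) : Prop :=
  (exists d, D d) /\
  (forall x y, D x -> D y -> exists z, D z /\ le x z /\ le y z).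

Definition image {C : cs} (f : C -> C) (D : C -> Prop) : C -> Prop :=
  fun y => exists x, D x /\ y = f x.

Definition continuous {C : cs} (f : C -> C) : Prop :=
  forall D : C -> Prop, directed D -> f (sup D) = sup (image f D).

Definition space_function {C : cs} (f : C -> C) : Prop :=
  continuous f /\ f ctrue = ctrue /\ (forall c d, f (join c d) = join (f c) (f d)).

Definition fle {C : cs} (f g : C -> C) : Prop := forall c, le (f c) (g c).

Definition compact {C : cs} (e : C) : Prop :=
  forall D : C -> Prop, directed D -> le e (sup D) -> exists d, D d /\ le e d.

Definition spatial {C : cs} {G : Type} (s : G -> C -> C) : Prop :=
  forall i, space_function (s i).

Definition is_distributed_space {C : cs} {G : Type} (s : G -> C -> C)
    (I : G -> Prop) (f : C -> C) : Prop :=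
  (space_function f /\ forall i, I i -> fle f (s i)) /\
  (forall g, space_function g -> (forall i, I i -> fle g (s i)) -> fle g f).

Definition finite_subset {G : Type} (J I : G -> Prop) : Prop :=
  (exists l : list G, forall x, J x -> In x l) /\ (forall x, J x -> I x).

(* Main.v *)
Require Import Defs.
From Stdlib Require Import List Lia Classical ClassicalEpsilon.

Section Gen.
Variable C : cs.

Lemma lub_sup (S : C -> Prop) (m : C) :
  (forall x, S x -> le x m) -> (forall y, (forall x, S x -> le x y) -> le m y) -> sup S = m.
Proof.
  intros H1 H2. apply le_antisym.
  - apply sup_least; auto.
  - apply H2. apply sup_ub.
Qed.

Lemma max_sup (S : C -> Prop) (m : C) : S m -> (forall x, S x -> le x m) -> sup S = m.
Proof. intros Hm H. apply lub_sup; auto. Qed.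

Lemma join_ub1 (c d : C) : le c (join c d).
Proof. apply sup_ub. auto. Qed.
Lemma join_ub2 (c d : C) : le d (join c d).
Proof. apply sup_ub. auto. Qed.
Lemma join_least (c d y : C) : le c y -> le d y -> le (join c d) y.
Proof. intros. apply sup_least. intros x [->| ->]; auto. Qed.
Lemma ctrue_le (x : C) : le ctrue x.
Proof. apply sup_least. intros _ []. Qed.

Lemma sf_mono (f : C -> C) : space_function f -> forall x y, le x y -> le (f x) (f y).
Proof.
  intros [_ [_ Hj]] x y Hxy.
  assert (E : join x y = y).
  { apply le_antisym. apply join_least; auto using le_refl. apply join_ub2. }
  rewrite <- E, Hj. apply join_ub1.
Qed.

Variable G : Type.
Variable s : G -> C -> C.

Definition Dl (I : G -> Prop) (c : C) : C :=
  sup (fun y => exists g, space_function g /\ (forall i, I i -> fle g (s i)) /\ y = g c).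

Lemma Dl_ub I g c : space_function g -> (forall i, I i -> fle g (s i)) -> le (g c) (Dl I c).
Proof. intros. apply sup_ub. eauto. Qed.

Lemma Dl_mono I x y : le x y -> le (Dl I x) (Dl I y).
Proof.
  intros H. apply sup_least. intros z [g [Hg [Hi ->]]].
  eapply le_trans. apply (sf_mono g Hg _ _ H). apply Dl_ub; auto.
Qed.

Lemma Dl_sf I : space_function (Dl I).
Proof.
  split; [|split].
  - intros D HD. apply le_antisym.
    + apply sup_least. intros z [g [Hg [Hi ->]]].
      destruct Hg as [Hc Hr]. rewrite (Hc D HD).
      apply sup_least. intros w [d [Hd ->]].
      eapply le_trans. apply (Dl_ub I g d); auto. split; auto.
      apply sup_ub. exists d; auto.
    + apply sup_least. intros w [d [Hd ->]]. apply Dl_mono. apply sup_ub; auto.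
  - apply le_antisym. apply sup_least. intros z [g [Hg [Hi ->]]].
    destruct Hg as [_ [H _]]. rewrite H. apply le_refl. apply ctrue_le.
  - intros c d. apply le_antisym.
    + apply sup_least. intros z [g [Hg [Hi ->]]].
      pose proof Hg as [_ [_ Hj]]. rewrite Hj.
      apply join_least.
      * eapply le_trans. apply (Dl_ub I g c); auto. apply join_ub1.
      * eapply le_trans. apply (Dl_ub I g d); auto. apply join_ub2.
    + apply join_least; apply Dl_mono. apply join_ub1. apply join_ub2.
Qed.

Lemma Dl_dist I : is_distributed_space s I (Dl I).
Proof.
  split; [split|].
  - apply Dl_sf.
  - intros i Hi c. apply sup_least. intros z [g [Hg [Hgi ->]]]. apply Hgi; auto.
  - intros g Hg Hgi c. apply Dl_ub; auto.
Qed.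
End Gen.

Inductive K := Bot | P (b : bool) (n : nat) | Top.

Definition cle (x y : K) : Prop :=
  match x, y with
  | Bot, _ => True
  | _, Top => True
  | P b n, P b' m => b = b' /\ m <= n
  | _, _ => False
  end.

Lemma cle_refl x : cle x x.
Proof. destruct x; simpl; auto. Qed.
Lemma cle_trans x y z : cle x y -> cle y z -> cle x z.
Proof. destruct x, y, z; simpl; intuition (subst; auto; try lia). Qed.
Lemma cle_antisym x y : cle x y -> cle y x -> x = y.
Proof.
  destruct x, y; simpl; intuition (subst; auto; try easy).
  f_equal; lia.
Qed.

Lemma least_ex (Q : nat -> Prop) : (exists n, Q n) -> exists n, Q n /\ forall m, Q m -> n <= m.
Proof.
  intros [n Hn]. apply NNPP. intro H.
  assert (forall k, forall j, j <= k -> ~ Q j).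
  { induction k; intros j Hj HQ.
    - apply H. exists j. split; auto. intros; lia.
    - destruct (PeanoNat.Nat.eq_dec j (S k)).
      + subst. apply H. exists (S k). split; auto. intros m Hm.
        destruct (Compare_dec.le_lt_dec (S k) m); auto. exfalso. apply (IHk m); auto; lia.
      + apply (IHk j); auto; lia. }
  apply (H0 n n); auto.
Qed.

Lemma one_side (S : K -> Prop) b :
  ~ S Top -> (exists n, S (P b n)) -> ~ (exists n, S (P (negb b) n)) ->
  exists m, S m /\ forall x, S x -> cle x m.
Proof.
  intros HT Hb Hnb. destruct (least_ex _ Hb) as [n0 [H0 Hl]].
  exists (P b n0). split; auto. intros x Hx. destruct x as [|b' k|]; simpl; auto.
  - destruct (Bool.bool_dec b' b).
    + subst. split; auto.
    + exfalso. apply Hnb. exists k. destruct b, b'; simpl; congruence.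
Qed.

Lemma lub_ex (S : K -> Prop) : exists m, (forall x, S x -> cle x m) /\
   (forall y, (forall x, S x -> cle x y) -> cle m y).
Proof.
  destruct (classic (S Top)) as [HT|HT].
  { exists Top. split. intros x _; destruct x; simpl; auto.
    intros y H. apply H; auto. }
  destruct (classic (exists n, S (P true n))) as [Ht|Ht];
  destruct (classic (exists n, S (P false n))) as [Hf|Hf].
  - exists Top. split. intros x _; destruct x; simpl; auto.
    intros y H. destruct Ht as [n Hn], Hf as [m Hm].
    pose proof (H _ Hn). pose proof (H _ Hm).
    destruct y; simpl in *; intuition congruence.
  - destruct (one_side S true HT Ht Hf) as [m [Hm Hx]].
    exists m; split; auto.
  - destruct (one_side S false HT Hf Ht) as [m [Hm Hx]].
    exists m; split; auto.
  - exists Bot. split; [|intros; simpl; auto].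
    intros x Hx. destruct x as [|[|] k|]; simpl; auto.
    + apply Ht; eauto.
    + apply Hf; eauto.
Qed.

Definition islub (S : K -> Prop) m := (forall x, S x -> cle x m) /\
   (forall y, (forall x, S x -> cle x y) -> cle m y).

Definition csup (S : K -> Prop) : K := epsilon (inhabits Bot) (islub S).

Lemma csup_spec S : islub S (csup S).
Proof. unfold csup. apply (epsilon_spec (inhabits Bot) (islub S)). apply lub_ex. Qed.

Definition KC : cs := Build_cs K cle cle_refl cle_trans cle_antisym csup
  (fun S => proj1 (csup_spec S)) (fun S => proj2 (csup_spec S)).

Lemma dir_max (D : KC -> Prop) : directed D -> exists m, D m /\ forall x, D x -> le x m.
Proof.
  intros [[d Hd] Hdir].
  destruct (classic (D Top)) as [HT|HT].
  { exists Top. split; auto. intros x _; destruct x; simpl; auto. }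
  destruct (classic (exists n, D (P true n))) as [Ht|Ht];
  destruct (classic (exists n, D (P false n))) as [Hf|Hf].
  - exfalso. destruct Ht as [n Hn], Hf as [m Hm].
    destruct (Hdir _ _ Hn Hm) as [z [Hz [H1 H2]]].
    destruct z; simpl in *; intuition congruence.
  - apply (one_side D true HT Ht Hf).
  - apply (one_side D false HT Hf Ht).
  - exists d. split; auto. intros x Hx.
    destruct x as [|[|] k|]; simpl; auto.
    + exfalso; apply Ht; eauto.
    + exfalso; apply Hf; eauto.
    + contradiction.
Qed.

Definition cj (x y : K) : K :=
  match x, y with
  | Bot, _ => y
  | _, Bot => x
  | Top, _ => Top
  | _, Top => Top
  | P b n, P b' m => if Bool.eqb b b' then P b (Nat.min n m) else Top
  end.

Lemma join_cj (x y : KC) : join x y = cj x y.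
Proof.
  apply lub_sup.
  - intros z [->| ->]; destruct x as [|[|] n|], y as [|[|] m|]; simpl; auto; split; auto; lia.
  - intros w H. pose proof (H x (or_introl eq_refl)). pose proof (H y (or_intror eq_refl)).
    destruct x as [|[|] n|], y as [|[|] m|], w as [|[|] k|]; simpl in *; intuition (try congruence; try lia).
Qed.

Lemma ctrue_Bot : (@ctrue KC) = Bot.
Proof. apply le_antisym. apply sup_least. intros _ []. simpl; auto. Qed.

Definition sfun (i : nat) (x : K) : K :=
  match x with
  | P true n => P true (Nat.max n i)
  | _ => x
  end.

Lemma sfun_mono i (x y : KC) : le x y -> @le KC (sfun i x) (sfun i y).
Proof.
  destruct x as [|[|] n|], y as [|[|] m|]; simpl; intuition (try congruence; try lia).
Qed.

Lemma sfun_sf i : @space_function KC (sfun i).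
Proof.
  split; [|split].
  - intros D HD. destruct (dir_max D HD) as [m [Hm Hx]].
    rewrite (max_sup KC D m Hm Hx). symmetry. apply max_sup.
    exists m; auto. intros z [d [Hd ->]]. apply sfun_mono; auto.
  - rewrite ctrue_Bot. reflexivity.
  - intros c d. rewrite !join_cj.
    destruct c as [|[|] n|], d as [|[|] m|]; simpl; auto.
    f_equal. lia.
Qed.

Lemma le_list_sum (l : list nat) x : In x l -> x <= list_sum l.
Proof. induction l; simpl. intros []. intros [->|H]; try lia. specialize (IHl H); lia. Qed.

Theorem mainTheorem5 :
  exists (C : cs) (G : Type) (s : G -> C -> C) (Delta : (G -> Prop) -> C -> C),
    spatial s /\
    (forall I : G -> Prop, is_distributed_space s I (Delta I)) /\
    exists (c e : C) (I : G -> Prop),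
      compact e /\
      le (Delta I e) c /\
      ~ (exists J : G -> Prop, finite_subset J I /\ le (Delta J e) c).
Proof.
  exists KC, nat, sfun, (Dl KC nat sfun).
  split; [exact sfun_sf|]. split; [apply Dl_dist|].
  exists Bot, Top, (fun _ => True). split; [|split].
  - intros D HD H. destruct (dir_max D HD) as [m [Hm Hx]].
    rewrite (max_sup KC D m Hm Hx) in H. eauto.
  - apply sup_least. intros z [g [Hg [Hgi ->]]].
    assert (HA : forall n, g (P true n) = Bot).
    { intros n. remember (g (P true n)) as w eqn:Ew.
      destruct w as [|b k|]; auto; exfalso.
      - pose proof (Hgi (S k) I (P true n)). rewrite <- Ew in H.
        simpl in H. destruct b; intuition (try congruence; try lia).
      - pose proof (Hgi 0 I (P true n)). rewrite <- Ew in H. simpl in H. auto. }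
    assert (HB : forall m, g Top = g (P false m)).
    { intros m. assert (E : (Top : KC) = @join KC (P true 0) (P false m)).
      { rewrite join_cj. reflexivity. }
      destruct Hg as [_ [_ Hj]]. rewrite E, Hj, HA, join_cj. reflexivity. }
    assert (HF : forall m, cle (g (P false m)) (P false m)).
    { intros m. apply (Hgi 0 I). }
    remember (g Top) as w eqn:Ew. destruct w as [|b k|]; simpl; auto.
    + pose proof (HF (S k)). rewrite <- HB in H. simpl in H. intuition lia.
    + pose proof (HF 0). rewrite <- HB in H. simpl in H. auto.
  - intros [J [[[l Hl] _] HJ]].
    assert (H : @le KC (sfun (list_sum l) Top) (Dl KC nat sfun J Top)).
    { apply Dl_ub. apply sfun_sf. intros i Hi c.
      pose proof (le_list_sum l i (Hl i Hi)).
      destruct c as [|[|] n|]; simpl; auto. split; auto. lia. }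
    pose proof (le_trans KC _ _ _ H HJ) as H0. simpl in H0. auto.
Qed.
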